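(* Let $p$ be an odd prime, $r\ge1$, and $d_{1},\dots,d_{r}$ square-free integers. (1) If $p\nmid d_{1}$, then all the primes above $p$ split completely in $\mathbb{Q}_{\infty}(\sqrt{d_{1}},\sqrt{d_{2}},\dots,\sqrt{d_{r}})/\mathbb{Q}_{\infty}(\sqrt{d_{2}},\dots,\sqrt{d_{r}})$. (2) If $p\nmid\prod_{i=1}^{r-1}d_{i}$, then all the primes above $p$ split completely in $\mathbb{Q}_{\infty}(\sqrt{d_{1}},\dots,\sqrt{d_{r-1}})/\mathbb{Q}_{\infty}$.
   Context: $\mathbb{Q}_\infty=\bigcup_{n\ge0}\mathbb{Q}(\zeta_{2^{n+2}}+\zeta_{2^{n+2}}^{-1})$ is the cyclotomic $\mathbb{Z}_2$-extension of $\mathbb{Q}$. *)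

(* Defs.v *)
From mathcomp Require Import all_boot all_order all_algebra all_field.
Set Implicit Arguments. Unset Strict Implicit. Unset Printing Implicit Defensive.
Import Order.TTheory GRing.Theory Num.Theory.
Local Open Scope ring_scope.

(* All fields are subfields of the algebraic closure algC, given as
   Prop-valued predicates (sets) algC -> Prop. *)
Definition subsetC := algC -> Prop.

Definition Qbase : subsetC := fun x => exists q : rat, x = ratr q.

Definition adj (R : subsetC) (a : algC) : subsetC :=
  fun x => exists2 c : seq algC, (forall i, (i < size c)%N -> R c`_i) &
             x = \sum_(i < size c) c`_i * a ^+ i.

(* Q[a_1,...,a_k]; since all a_i are algebraic this is the field Q(a_1,...,a_k). *)
Definition Qadj (s : seq algC) : subsetC := foldr (fun a R => adj R a) Qbase s.

Definition Qinf_adj (s : seq algC) : subsetC :=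
  fun x => exists n : nat, exists2 z : algC,
     (2 ^ n.+2)%N.-primitive_root z & Qadj (z + z^-1 :: s) x.

Definition Qinf : subsetC := Qinf_adj [::].

Definition ints (K : subsetC) : subsetC := fun x => K x /\ x \in Aint.

Definition prime_above (K : subsetC) (p : nat) (P : subsetC) : Prop :=
  [/\ (forall x, P x -> ints K x), P 0,
      (forall x y, P x -> P y -> P (x - y)),
      (forall a x, ints K a -> P x -> P (a * x))
    & [/\ ~ P 1,
        (forall x y, ints K x -> ints K y -> P (x * y) -> P x \/ P y)
      & P p%:R]].

Definition lies_over (K : subsetC) (Q P : subsetC) : Prop :=
  forall x, K x -> (Q x <-> P x).

Definition ext_degree (K L : subsetC) (n : nat) : Prop :=
  (forall x, K x -> L x) /\
  exists b : 'I_n -> algC,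
    [/\ forall i, L (b i),
        (forall c : 'I_n -> algC, (forall i, K (c i)) ->
            \sum_i c i * b i = 0 -> forall i, c i = 0)
      & (forall x, L x -> exists2 c : 'I_n -> algC,
            (forall i, K (c i)) & x = \sum_i c i * b i)].

Definition splits_completely_above (p : nat) (K L : subsetC) : Prop :=
  forall n, ext_degree K L n ->
  forall P, prime_above K p P ->
  exists Qs : 'I_n -> subsetC,
    [/\ (forall i, prime_above L p (Qs i) /\ lies_over K (Qs i) P),
        (forall i j, i != j -> exists x, ~ (Qs i x <-> Qs j x))
      & (forall Q, prime_above L p Q -> lies_over K Q P ->
           exists i, forall x, Q x <-> Qs i x)].

Definition squarefree_int (d : int) : Prop :=
  d != 0 /\ forall m : nat, (m * m %| `|d|)%N -> m = 1%N.

Definition sqrt_int (d : int) : algC := sqrtC (d%:~R).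

(* Main.v *)
Require Import Defs.
From mathcomp Require Import all_boot all_order all_algebra all_field ring zify.
From Stdlib Require Import Classical FunctionalExtensionality PropExtensionality.
Set Implicit Arguments. Unset Strict Implicit. Unset Printing Implicit Defensive.
Import Order.TTheory GRing.Theory Num.Theory.
Local Open Scope ring_scope.
Notation cset := (algC -> Prop).

Definition subringQ (S : cset) :=
  [/\ forall q : rat, S (ratr q), forall x y, S x -> S y -> S (x + y),
      forall x, S x -> S (- x) & forall x y, S x -> S y -> S (x * y)].

Section SubringFacts.
Variable S : cset.
Hypothesis hS : subringQ S.
Lemma sr_rat q : S (ratr q). Proof. by case: hS => h *; apply: h. Qed.
Lemma sr_add x y : S x -> S y -> S (x + y). Proof. by case: hS => _ h *; apply: h. Qed.
Lemma sr_opp x : S x -> S (- x). Proof. by case: hS => _ _ h *; apply: h. Qed.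
Lemma sr_mul x y : S x -> S y -> S (x * y). Proof. by case: hS => _ _ _ h *; apply: h. Qed.
Lemma sr_sub x y : S x -> S y -> S (x - y).
Proof. by move=> ? ?; apply: sr_add => //; apply: sr_opp. Qed.
Lemma sr0 : S 0. Proof. by have := sr_rat 0; rewrite rmorph0. Qed.
Lemma sr1 : S 1. Proof. by have := sr_rat 1; rewrite rmorph1. Qed.
Lemma sr_int (m : int) : S (m%:~R).
Proof. by have := sr_rat m%:~R; rewrite rmorph_int. Qed.
Lemma sr_nat (m : nat) : S (m%:R).
Proof. by have := sr_int m; rewrite pmulrn. Qed.
Lemma sr_exp x n : S x -> S (x ^+ n).
Proof. by move=> Sx; elim: n => [|n IH]; [rewrite expr0; apply: sr1 | rewrite exprS; apply: sr_mul]. Qed.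
Lemma sr_sum (I : finType) (F : I -> algC) : (forall i, S (F i)) -> S (\sum_i F i).
Proof.
move=> h; apply: (big_ind S) => //; [exact: sr0 | exact: sr_add].
Qed.
End SubringFacts.

Fixpoint hor (a : algC) (c : seq algC) : algC :=
  if c is x :: c' then x + a * hor a c' else 0.

Lemma hor_sum a c : \sum_(i < size c) c`_i * a ^+ i = hor a c.
Proof.
elim: c => [|x c IH] /=; first by rewrite big_ord0.
rewrite big_ord_recl /= expr0 mulr1 -IH mulr_sumr; congr (_ + _).
by apply: eq_bigr => i _; rewrite exprS mulrCA.
Qed.

Fixpoint allR (R : cset) (c : seq algC) : Prop :=
  if c is x :: c' then R x /\ allR R c' else True.

Lemma allR_nth R c : (forall i, (i < size c)%N -> R c`_i) <-> allR R c.
Proof.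
elim: c => [|x c IH] /=; first by split.
split=> [h|[hx hc] [|i] //=]; last by rewrite ltnS => /(IH.2 hc).
by split; [apply: (h 0%N) | apply/IH => i hi; apply: (h i.+1)].
Qed.

Lemma adjE R a x : adj R a x <-> exists2 c, allR R c & x = hor a c.
Proof.
split=> [[c /allR_nth hc ->]|[c /allR_nth hc ->]]; exists c => //;
  by rewrite hor_sum.
Qed.

Fixpoint addl (c c' : seq algC) : seq algC :=
  match c, c' with
  | x :: c1, y :: c1' => (x + y) :: addl c1 c1'
  | [::], _ => c'
  | _, [::] => c
  end.

Lemma hor_addl a c c' : hor a (addl c c') = hor a c + hor a c'.
Proof.
elim: c c' => [|x c IH] [|y c'] /=; rewrite ?add0r ?addr0 //.
by rewrite IH mulrDr addrACA.
Qed.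

Lemma allR_addl R c c' : (forall x y, R x -> R y -> R (x + y)) ->
  allR R c -> allR R c' -> allR R (addl c c').
Proof.
move=> hadd; elim: c c' => [|x c IH] [|y c'] //= [hx hc] [hy hc'].
by split; [apply: hadd | apply: IH].
Qed.

Lemma allR_map R (f : algC -> algC) c : (forall x, R x -> R (f x)) ->
  allR R c -> allR R (map f c).
Proof. by move=> hf; elim: c => [|x c IH] //= [hx hc]; split; auto. Qed.

Section Adj.
Variable R : cset.
Hypothesis hR : subringQ R.
Variable a : algC.

Lemma adj_R x : R x -> adj R a x.
Proof. by move=> hx; apply/adjE; exists [:: x] => //=; rewrite mulr0 addr0. Qed.

Lemma adj_a : adj R a a.
Proof.
apply/adjE; exists [:: 0; 1] => /=; first by split; [apply: sr0 | split; [apply: sr1|]].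
by rewrite mulr0 addr0 mulr1 add0r.
Qed.

Lemma adj_add x y : adj R a x -> adj R a y -> adj R a (x + y).
Proof.
move=> /adjE[c hc ->] /adjE[c' hc' ->]; apply/adjE; exists (addl c c').
  by apply: allR_addl => //; apply: sr_add.
by rewrite hor_addl.
Qed.

Lemma hor_map_mul r c : hor a (map (fun y => r * y) c) = r * hor a c.
Proof. by elim: c => [|x c IH] /=; rewrite ?mulr0 // IH mulrDr mulrCA. Qed.

Lemma adj_mulR r x : R r -> adj R a x -> adj R a (r * x).
Proof.
move=> hr /adjE[c hc ->]; apply/adjE; exists (map (fun y => r * y) c).
  by apply: allR_map => // y hy; apply: sr_mul.
by rewrite hor_map_mul.
Qed.

Lemma adj_opp x : adj R a x -> adj R a (- x).
Proof.
by move=> hx; rewrite -mulN1r; apply: adj_mulR => //; rewrite -(rmorphN1 ratr); apply: sr_rat.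
Qed.

Lemma adj_mula x : adj R a x -> adj R a (a * x).
Proof.
move=> /adjE[c hc ->]; apply/adjE; exists (0 :: c) => /=; first by split=> //; apply: sr0.
by rewrite add0r.
Qed.

Lemma adj_mul x y : adj R a x -> adj R a y -> adj R a (x * y).
Proof.
move=> /adjE[c hc ->] hy; elim: c hc => [|u c IH] /= hc; first by rewrite mul0r; apply: adj_R; apply: sr0.
case: hc => hu hc; rewrite mulrDl -mulrA; apply: adj_add; first exact: adj_mulR.
by apply: adj_mula; apply: IH.
Qed.

Lemma adj_ring : subringQ (adj R a).
Proof.
split; [by move=> q; apply: adj_R; apply: sr_rat | exact: adj_add | exact: adj_opp | exact: adj_mul].
Qed.

Lemma adj_min (T : cset) : subringQ T -> (forall x, R x -> T x) -> T a ->
  forall x, adj R a x -> T x.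
Proof.
move=> hT hRT hTa x /adjE[c hc ->]; elim: c hc => [|u c IH] /= hc; first exact: sr0.
by case: hc => hu hc; apply: sr_add => //; [apply: hRT | apply: sr_mul => //; apply: IH].
Qed.
End Adj.

Lemma adj_mono (R R' : cset) a : (forall x, R x -> R' x) -> forall x, adj R a x -> adj R' a x.
Proof.
move=> h x [c hc ->]; exists c => // i hi; exact/h/hc.
Qed.

Lemma Qbase_ring : subringQ Qbase.
Proof.
split.
- by move=> q; exists q.
- by move=> _ _ [q ->] [q' ->]; exists (q + q'); rewrite rmorphD.
- by move=> _ [q ->]; exists (- q); rewrite rmorphN.
- by move=> _ _ [q ->] [q' ->]; exists (q * q'); rewrite rmorphM.
Qed.

Lemma Qadj_ring s : subringQ (Qadj s).
Proof. elim: s => [|a s IH] /=; [exact: Qbase_ring | exact: adj_ring]. Qed.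

Lemma Qbase_sub (S : cset) : subringQ S -> forall x, Qbase x -> S x.
Proof. by move=> hS _ [q ->]; apply: sr_rat. Qed.

Lemma cheb_aux (z y : algC) k : z * y = 1 ->
  z ^+ k.+2 + y ^+ k.+2 = (z + y) * (z ^+ k.+1 + y ^+ k.+1) - (z ^+ k + y ^+ k).
Proof.
move=> hzy.
have e1 : z * y ^+ k.+1 = y ^+ k by rewrite exprS mulrA hzy mul1r.
have e2 : y * z ^+ k.+1 = z ^+ k by rewrite exprS mulrA [y * z]mulrC hzy mul1r.
rewrite mulrDl !mulrDr e1 e2 -!exprS.
set A := z ^+ k.+2; set B := y ^+ k.+2; set C := z ^+ k; set E := y ^+ k.
ring.
Qed.

Lemma cheb (S : cset) (z : algC) : subringQ S -> z != 0 -> S (z + z^-1) ->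
  forall k, S (z ^+ k + z ^- k).
Proof.
move=> hS nz hw.
suff: forall k, S (z ^+ k + z ^- k) /\ S (z ^+ k.+1 + z ^- k.+1) by move=> h k; case: (h k).
elim=> [|k [IH1 IH2]].
  by rewrite !expr0 invr1 expr1; split=> //; apply: (sr_add hS); apply: sr1.
split=> //.
have ->: z ^+ k.+2 + z ^- k.+2 = (z + z^-1) * (z ^+ k.+1 + z ^- k.+1) - (z ^+ k + z ^- k).
  by rewrite -!exprVn; apply: cheb_aux; rewrite mulfV.
by apply: (sr_sub hS) => //; apply: (sr_mul hS).
Qed.

Definition lev (s : seq algC) (z : algC) : cset := adj (Qadj s) (z + z^-1).

Lemma lev_ring s z : subringQ (lev s z).
Proof. exact/adj_ring/Qadj_ring. Qed.

Lemma prim2_neq0 n (z : algC) : (2 ^ n.+2)%N.-primitive_root z -> z != 0.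
Proof.
move=> hz; apply/eqP=> z0; have := prim_expr_order hz; rewrite z0 expr0n.
by rewrite expn_eq0 /= => /eqP; rewrite eq_sym oner_eq0.
Qed.

Lemma lev_mono s n m (z w : algC) : (n <= m)%N ->
  (2 ^ n.+2)%N.-primitive_root z -> (2 ^ m.+2)%N.-primitive_root w ->
  forall x, lev s z x -> lev s w x.
Proof.
move=> nm hz hw; apply: adj_min; first exact: lev_ring.
  by move=> x hx; apply: adj_R => //; apply: Qadj_ring.
have: z ^+ (2 ^ m.+2)%N = 1.
  by rewrite -(subnKC nm) -addSn -addSn expnD exprM (prim_expr_order hz) expr1n.
case/(prim_rootP hw)=> i ->.
apply: cheb; [exact: lev_ring | exact: prim2_neq0 hw | exact: (adj_a (Qadj_ring s))].
Qed.

Lemma prim2_exists m : {w : algC | (2 ^ m.+2)%N.-primitive_root w}.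
Proof. by apply: C_prim_root_exists; rewrite expn_gt0. Qed.

Lemma Qinf_adj_2 s x y : Qinf_adj s x -> Qinf_adj s y ->
  exists n, exists2 w, (2 ^ n.+2)%N.-primitive_root w & lev s w x /\ lev s w y.
Proof.
move=> [n1 [z1 h1 hx]] [n2 [z2 h2 hy]]; exists (maxn n1 n2).
have [w hw] := prim2_exists (maxn n1 n2); exists w => //; split.
  by apply: (lev_mono (leq_maxl n1 n2) h1 hw).
by apply: (lev_mono (leq_maxr n1 n2) h2 hw).
Qed.

Lemma Qinf_adj_ring s : subringQ (Qinf_adj s).
Proof.
have [w hw] := prim2_exists 0.
split.
- by move=> q; exists 0%N, w => //; exact: (sr_rat (lev_ring s w) q).
- move=> x y hx hy; have [n [z hz [hx' hy']]] := Qinf_adj_2 hx hy.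
  by exists n, z => //; exact: (sr_add (lev_ring s z) hx' hy').
- by move=> x [n [z hz hx]]; exists n, z => //; exact: (sr_opp (lev_ring s z) hx).
- move=> x y hx hy; have [n [z hz [hx' hy']]] := Qinf_adj_2 hx hy.
  by exists n, z => //; exact: (sr_mul (lev_ring s z) hx' hy').
Qed.

Lemma hor_in (S : cset) x c : subringQ S -> S x -> allR S c -> S (hor x c).
Proof.
move=> hS hx; elim: c => [|u c IH] /=; first by move=> _; apply: sr0.
by case=> hu hc; exact: (sr_add hS hu (sr_mul hS hx (IH hc))).
Qed.

Lemma inv_aux (S : cset) x : subringQ S -> S x -> x != 0 -> forall c,
  allR Qbase c -> has (fun y => y != 0) c -> hor x c = 0 -> S x^-1.
Proof.
move=> hS hx nx; elim=> [|u c IH] //= [hu hc] hnz.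
have hcS : allR S c.
  by elim: c {IH hnz} hc => [|v c IHc] //= [hv hc]; split; [exact: (Qbase_sub hS hv)|apply: IHc].
have [u0|unz] := eqVneq u 0.
  rewrite u0 add0r => /eqP; rewrite mulf_eq0 (negbTE nx) /= => /eqP h0.
  by apply: IH => //; move: hnz; rewrite u0 eqxx.
move=> /eqP; rewrite addr_eq0 => /eqP hxc.
have ->: x^-1 = - (hor x c) * u^-1.
  by apply: (mulfI nx); rewrite mulfV // mulrA mulrN -hxc mulfV.
apply: (sr_mul hS (sr_opp hS (hor_in hS hx hcS))).
case: hu => q hq; rewrite hq -fmorphV; exact: (sr_rat hS).
Qed.

Lemma sr_inv (S : cset) x : subringQ S -> S x -> x != 0 -> S x^-1.
Proof.
move=> hS hx nx.
have [p [Dp mp] _] := minCpolyP x.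
have hr := root_minCpoly x; rewrite Dp in hr.
apply: (inv_aux hS hx nx (c := polyseq (map_poly (@ratr algC) p))).
- apply/allR_nth => i hi; rewrite coef_map; exact: (Qbase_sub Qbase_ring) (ex_intro _ _ erefl).
- apply/hasP; exists (lead_coef (map_poly (@ratr algC) p)); last by rewrite lead_coef_map (monicP mp) rmorph1 oner_eq0.
  rewrite lead_coefE; apply: mem_nth; rewrite prednK // lt0n size_poly_eq0 map_poly_eq0.
  exact: monic_neq0.
- by rewrite -hor_sum -horner_coef; apply/eqP.
Qed.

Definition fieldQ (K : cset) := subringQ K /\ forall x, K x -> x != 0 -> K x^-1.

Lemma Qinf_adj_field s : fieldQ (Qinf_adj s).
Proof.
split; first exact: Qinf_adj_ring.
by move=> x [n [z hz hx]] nx; exists n, z => //; exact: (sr_inv (lev_ring s z) hx nx).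
Qed.

Lemma Qinf_sub s x : Qinf x -> Qinf_adj s x.
Proof.
move=> [n [z hz hx]]; exists n, z => //; move: hx; apply: adj_mono.
exact: Qbase_sub (Qadj_ring s).
Qed.

Lemma Qinf_prim n (z : algC) : (2 ^ n.+2)%N.-primitive_root z -> Qinf (z + z^-1).
Proof. by move=> hz; exists n, z => //; exact: (adj_a Qbase_ring). Qed.

Definition quad (K : cset) (al : algC) : cset :=
  fun x => exists u v, [/\ K u, K v & x = u + v * al].

Lemma quad_ring K al : subringQ K -> Qbase (al ^+ 2) -> subringQ (quad K al).
Proof.
move=> hK hal; split.
- by move=> q; exists (ratr q), 0; split; [exact: (sr_rat hK) | exact: (sr0 hK) | rewrite mul0r addr0].
- move=> _ _ [u [v [hu hv ->]]] [u' [v' [hu' hv' ->]]].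
  exists (u + u'), (v + v'); split; [exact: (sr_add hK) | exact: (sr_add hK) |ring].
- move=> _ [u [v [hu hv ->]]]; exists (- u), (- v); split; [exact: (sr_opp hK) | exact: (sr_opp hK) | ring].
- move=> _ _ [u [v [hu hv ->]]] [u' [v' [hu' hv' ->]]].
  have ha : K (al ^+ 2) by exact: (Qbase_sub hK hal).
  exists (u * u' + v * v' * al ^+ 2), (u * v' + v * u'); split.
  + by apply: (sr_add hK); apply: (sr_mul hK) => //; apply: (sr_mul hK).
  + by apply: (sr_add hK); apply: (sr_mul hK).
  + ring.
Qed.

Lemma quad_sub K al x : subringQ K -> K x -> quad K al x.
Proof. by move=> hK hx; exists x, 0; split=> //; [exact: (sr0 hK) | rewrite mul0r addr0]. Qed.

Lemma quad_al K al : subringQ K -> quad K al al.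
Proof. by move=> hK; exists 0, 1; split; [exact: (sr0 hK) | exact: (sr1 hK) | rewrite add0r mul1r]. Qed.

Lemma quad_in K al : subringQ K -> K al -> quad K al = K.
Proof.
move=> hK hal; apply: functional_extensionality => x; apply: propositional_extensionality.
split; last exact: quad_sub.
by move=> [u [v [hu hv ->]]]; apply: (sr_add hK) => //; apply: (sr_mul hK).
Qed.

Lemma lev_quad s z al x : Qbase (al ^+ 2) ->
  (adj (adj (Qadj s) al) (z + z^-1) x <-> quad (lev s z) al x).
Proof.
move=> hal; have hR := Qadj_ring s; split.
- apply: adj_min.
  + exact/quad_ring/hal/lev_ring.
  + apply: adj_min; first exact/quad_ring/hal/lev_ring.
      by move=> y hy; apply: quad_sub; [exact: lev_ring | exact: adj_R].
    exact/quad_al/lev_ring.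
  + by apply: quad_sub; [exact: lev_ring | exact: (adj_a hR)].
- have hR' : subringQ (adj (Qadj s) al) by exact: adj_ring.
  have sub : forall y, lev s z y -> adj (adj (Qadj s) al) (z + z^-1) y.
    by apply: adj_mono => y hy; apply: adj_R.
  move=> [u [v [hu hv ->]]]; apply: (sr_add (adj_ring hR' (z + z^-1))); first exact: sub.
  apply: (sr_mul (adj_ring hR' (z + z^-1))); first exact: sub.
  by apply: adj_R => //; exact: (adj_a hR).
Qed.

Lemma Qinf_adj_cons s al : Qbase (al ^+ 2) -> Qinf_adj (al :: s) = quad (Qinf_adj s) al.
Proof.
move=> hal; apply: functional_extensionality => x; apply: propositional_extensionality.
split.
- move=> [n [z hz /(lev_quad _ _ _ hal) [u [v [hu hv ->]]]]].
  by exists u, v; split=> //; exists n; exists z.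
- move=> [u [v [hu hv ->]]]; have [n [z hz [hu' hv']]] := Qinf_adj_2 hu hv.
  by exists n, z => //; apply/(lev_quad _ _ _ hal); exists u, v.
Qed.

Lemma sq_eq (F : fieldType) (y z : F) : z ^+ 2 = y ^+ 2 -> z = y \/ z = - y.
Proof.
move=> /eqP; rewrite -subr_eq0 subr_sqr mulf_eq0 subr_eq0 addr_eq0.
by case/orP=> /eqP; [left|right].
Qed.

Lemma qr_lemma (F : finFieldType) : odd #|F| -> (2%:R : F) != 0 -> forall N a : F,
  (forall y, y ^+ 2 != N) -> (forall y, y ^+ 2 != a) -> exists c, a = N * c ^+ 2.
Proof.
move=> oddF two0 N a hN ha.
have N0 : N != 0 by have := hN 0; rewrite expr0n /= eq_sym.
pose S := [set y ^+ 2 | y in [set: F]].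
pose r (s : F) := odflt 0 [pick z | z ^+ 2 == s].
have hr : forall y, r (y ^+ 2) ^+ 2 = y ^+ 2.
  move=> y; rewrite /r; case: pickP => [z /eqP //|/(_ y)]; by rewrite eqxx.
pose g (y : F) := (y ^+ 2, y == r (y ^+ 2)).
have ginj : injective g.
  move=> y z [e1 e2]; case: (sq_eq e1) => // ez; subst y.
  move: e2; rewrite sqrrN; have [ht|nt] := eqVneq z (r (z ^+ 2)).
    rewrite -ht => /eqP hz.
    have : z * 2%:R = 0 by rewrite mulr_natr mulr2n -{1}hz addNr.
    by move/eqP; rewrite mulf_eq0 (negbTE two0) orbF => /eqP ->; rewrite oppr0.
  case: (sq_eq (hr z)) => ht; first by rewrite ht eqxx in nt.
  by rewrite ht eqxx.
have h1 : (#|F| <= #|S| * 2)%N.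
  have -> : #|F| = #|g @: [set: F]| by rewrite card_imset // cardsT.
  rewrite -card_bool -cardsT -cardsX; apply: subset_leq_card.
  apply/subsetP=> _ /imsetP[y _ ->]; rewrite in_setX in_setT andbT.
  by apply/imsetP; exists y; rewrite ?in_setT.
pose NS := [set N * s | s in S].
have h2 : #|NS| = #|S| by rewrite card_imset //; apply: mulfI.
have h3 : (#|S :&: NS| <= 1)%N.
  rewrite -(cards1 (0 : F)); apply: subset_leq_card; apply/subsetP=> x.
  rewrite in_setI => /andP[/imsetP[y _ ->] /imsetP[_ /imsetP[z _ ->] e]].
  rewrite in_set1; have [z0|zn] := eqVneq z 0.
    by rewrite e z0 expr0n mulr0.
  exfalso; move/negP: (hN (y / z)); apply; rewrite expr_div_n e mulfK //.
  by rewrite expf_neq0.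
have haS : a \notin S by apply/imsetP=> -[y _ /eqP]; rewrite eq_sym (negbTE (ha y)).
have : a \in NS.
  apply/negPn/negP=> haNS.
  have : (#|S :|: NS| <= #|[set~ a]|)%N.
    apply: subset_leq_card; apply/subsetP=> x; rewrite in_setU in_setC1 => hx.
    by apply/eqP=> ex; subst x; rewrite (negbTE haS) (negbTE haNS) in hx.
  rewrite cardsC1 => hle; have hUI := cardsUI S NS.
  have hne : #|F| != (#|S| * 2)%N.
    by apply/eqP=> e; move: oddF; rewrite e oddM andbF.
  move: h1 h2 h3 hle hUI hne; move: #|F| #|S| #|NS| #|S :|: NS| #|S :&: NS| => f s0 ns u i; lia.
case/imsetP=> _ /imsetP[c _ ->] ->; by exists c.
Qed.

Lemma Fp_int_eq0 p (m : int) : prime p -> ((m%:~R : 'F_p) == 0) = (p %| `|m|)%N.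
Proof.
move=> pp.
have key : forall n, ((n%:R : 'F_p) == 0) = (p %| n)%N.
  move=> n; have e := val_Fp_nat pp n; apply/eqP/idP.
    by move=> h; move: e; rewrite h /= => /esym/eqP; rewrite /dvdn.
  by rewrite /dvdn => /eqP h; apply/eqP; rewrite -val_eqE /= e h.
case: m => n; first exact: key.
by rewrite NegzE mulrNz oppr_eq0; apply: key.
Qed.

Section PrimeFacts.
Variable K : cset.
Hypothesis hK : subringQ K.
Variable p : nat.
Hypothesis pp : prime p.
Hypothesis op : odd p.
Variable P : cset.
Hypothesis hP : Defs.prime_above K p P.

Lemma ints_add x y : ints K x -> ints K y -> ints K (x + y).
Proof. by move=> [? ?] [? ?]; split; [exact: (sr_add hK) | exact: rpredD]. Qed.
Lemma ints_opp x : ints K x -> ints K (- x).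
Proof. by move=> [? ?]; split; [exact: (sr_opp hK) | rewrite rpredN]. Qed.
Lemma ints_sub x y : ints K x -> ints K y -> ints K (x - y).
Proof. by move=> ? ?; apply: ints_add => //; apply: ints_opp. Qed.
Lemma ints_mul x y : ints K x -> ints K y -> ints K (x * y).
Proof. by move=> [? ?] [? ?]; split; [exact: (sr_mul hK) | exact: rpredM]. Qed.
Lemma ints_int (m : int) : ints K (m%:~R).
Proof. by split; [exact: (sr_int hK) | exact: Aint_int]. Qed.
Lemma ints_exp x n : ints K x -> ints K (x ^+ n).
Proof. by move=> [? ?]; split; [exact: (sr_exp hK) | exact: rpredX]. Qed.

Lemma P_ints x : P x -> ints K x. Proof. by case: hP => h *; apply: h. Qed.
Lemma P0 : P 0. Proof. by case: hP. Qed.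
Lemma P_sub x y : P x -> P y -> P (x - y). Proof. by case: hP => _ _ h *; apply: h. Qed.
Lemma P_mul a x : ints K a -> P x -> P (a * x). Proof. by case: hP => _ _ _ h *; apply: h. Qed.
Lemma P_mulr a x : P x -> ints K a -> P (x * a). Proof. by move=> ? ?; rewrite mulrC; apply: P_mul. Qed.
Lemma P_not1 : ~ P 1. Proof. by case: hP => _ _ _ _ []. Qed.
Lemma P_prime x y : ints K x -> ints K y -> P (x * y) -> P x \/ P y.
Proof. by case: hP => _ _ _ _ [_ h _]; apply: h. Qed.
Lemma P_p : P p%:R. Proof. by case: hP => _ _ _ _ []. Qed.
Lemma P_opp x : P x -> P (- x). Proof. by move=> h; rewrite -sub0r; apply: P_sub => //; apply: P0. Qed.
Lemma P_add x y : P x -> P y -> P (x + y).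
Proof. by move=> hx hy; rewrite -[y]opprK; apply: P_sub => //; apply: P_opp. Qed.

Lemma P_int (m : int) : P (m%:~R) <-> (p %| `|m|)%N.
Proof.
split=> [hm|]; last first.
  move=> /dvdnP[k hk]; have -> : m%:~R = (sgz m * k%:Z)%:~R * p%:R :> algC.
    rewrite -[p%:R]/((p%:Z)%:~R) -intrM -mulrA -PoszM -hk.
    by rewrite -intEsg.
  by apply: P_mul; [apply: ints_int | apply: P_p].
apply/negPn/negP => ndvd.
have cop : coprime p `|m| by rewrite prime_coprime.
have [u [v huv]] := Bezoutz p m.
have : gcdz p m = 1 by rewrite /gcdz /=; apply/eqP.
move=> g1; rewrite g1 in huv; apply: P_not1.
have -> : (1 : algC) = (u%:~R) * p%:R + (v%:~R) * m%:~R.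
  by rewrite -[p%:R]/((p%:Z)%:~R) -!intrM -intrD huv.
apply: P_add; apply: P_mul => //; [exact: ints_int | exact: P_p | exact: ints_int].
Qed.

Lemma P_intE (m n : int) : P (m%:~R - n%:~R) <-> (m%:~R : 'F_p) = n%:~R.
Proof.
rewrite -intrB P_int -(Fp_int_eq0 _ pp) rmorphB /= subr_eq0.
by split=> /eqP.
Qed.

Lemma two_notP : ~ P 2%:R.
Proof.
move/(P_int 2)=> /= h; have := dvdn_leq _ h; move: op h.
case: p pp => [|[|[|q]]] //= _ _ _ /(_ isT); lia.
Qed.

Lemma Fp_two : (2%:R : 'F_p) != 0.
Proof.
have := Fp_int_eq0 2 pp; rewrite pmulrn => ->; apply/negP => h; apply: two_notP.
by apply/(P_int 2).
Qed.
End PrimeFacts.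

Lemma Fp_natr p (y : 'F_p) : ((nat_of_ord y)%:R : 'F_p) = y.
Proof. exact: natr_Zp. Qed.

Lemma nat_switch (G : nat -> Prop) a b : (a <= b)%N -> ~ G a -> G b ->
  exists j, [/\ (a <= j < b)%N, ~ G j & G j.+1].
Proof.
elim: b => [|b IH] hab hna hb.
  by move: hab; rewrite leqn0 => /eqP e; subst a.
have [gb|ngb] := classic (G b).
  have [e|hlt] : a = b.+1 \/ (a <= b)%N by lia.
    by subst a.
  have [j [h1 h2 h3]] := IH hlt hna gb; exists j; split=> //; lia.
exists b; split=> //; have [e|hlt] : a = b.+1 \/ (a <= b)%N by lia.
  by subst a.
lia.
Qed.

Section Descent.
Variable K : cset.
Hypothesis hK : subringQ K.
Hypothesis HQ : forall n (z : algC), (2 ^ n.+2)%N.-primitive_root z -> K (z + z^-1).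
Variable p : nat.
Hypothesis pp : prime p.
Hypothesis op : odd p.
Variable P : cset.
Hypothesis hP : Defs.prime_above K p P.

Let zeta := sval (prim2_exists p).
Let hzeta : (2 ^ p.+2)%N.-primitive_root zeta := svalP (prim2_exists p).
Let w j := zeta ^+ (2 ^ j).
Let e j := w j + (w j)^-1.

Lemma w_neq0 j : w j != 0.
Proof. by rewrite expf_neq0 // (prim2_neq0 hzeta). Qed.

Lemma e_rec j : e j.+1 = e j ^+ 2 - 2%:R.
Proof.
rewrite /e /w expnSr exprM; have := w_neq0 j; rewrite /w.
set u := zeta ^+ (2 ^ j) => nu.
rewrite -exprVn; set v := u^-1; have huv : u * v = 1 by rewrite mulfV.
have -> : (u + v) ^+ 2 - 2%:R = u ^+ 2 + v ^+ 2 + 2%:R * (u * v - 1) by ring.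
by rewrite huv subrr mulr0 addr0.
Qed.

Lemma e_p : e p = 0.
Proof.
rewrite /e /w; set u := zeta ^+ (2 ^ p).
have h4 : (u ^+ 2) ^+ 2 = 1.
  by rewrite /u -!exprM mulnA -!expnSr prim_expr_order.
have h2 : u ^+ 2 != 1.
  rewrite /u -exprM -expnSr -(prim_order_dvd hzeta).
  by rewrite dvdn_Pexp2l // ltnn.
have hm : u ^+ 2 = -1.
  have : (u ^+ 2 - 1) * (u ^+ 2 + 1) = 0.
    by rewrite -[X in (_ - X) * (_ + X)](expr1n _ 2) -subr_sqr !expr1n h4 subrr.
  move/eqP; rewrite mulf_eq0 subr_eq0 (negbTE h2) /=.
  by rewrite addr_eq0 => /eqP.
have nu : u != 0 by apply: w_neq0.
have -> : u^-1 = - u.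
  by apply: (mulfI nu); rewrite mulfV // mulrN -expr2 hm opprK.
by rewrite addrN.
Qed.

Lemma e_ints j : ints K (e j).
Proof.
elim: j => [|j IH].
  rewrite /e /w expn0 expr1; split; first exact: HQ hzeta.
  apply: rpredD; first exact: Aint_prim_root hzeta.
  apply: (@Aint_unity_root (2 ^ p.+2)); first by rewrite expn_gt0.
  by rewrite unity_rootE exprVn prim_expr_order // invr1.
rewrite e_rec; apply: (ints_sub hK); first exact: (ints_exp hK).
exact: (ints_int hK 2).
Qed.

Definition Good j := exists m : int, P (e j - m%:~R).

Lemma good_p : Good p.
Proof. by exists 0; rewrite e_p subrr; apply: (P0 hP). Qed.

Let f (x : 'F_p) := x ^+ 2 - 2%:R.

Lemma iter_f0 t : iter t.+1 f 0 = - 2%:R \/ iter t.+1 f 0 = 2%:R.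
Proof.
elim: t => [|t [IH|IH]].
- by left; rewrite /= /f expr0n /= sub0r.
- by right; rewrite iterS IH /f sqrrN; ring.
- by right; rewrite iterS IH /f; ring.
Qed.

Lemma iter_f0_neq0 t : iter t.+1 f 0 != 0.
Proof.
by case: (iter_f0 t) => ->; rewrite ?oppr_eq0 (Fp_two hK pp op hP).
Qed.

Lemma not_all_good : ~ (forall j, (j <= p)%N -> Good j).
Proof.
move=> hall.
have : forall i : 'I_p.+1, exists m : int, P (e i - m%:~R).
  by move=> i; apply: hall; rewrite -ltnS.
case/fin_all_exists=> g hg.
pose m j := g (inord j).
have hm : forall j, (j <= p)%N -> P (e j - (m j)%:~R).
  by move=> j hj; have := hg (inord j); rewrite inordK.
pose X j : 'F_p := (m j)%:~R.
have XR : forall j, (j < p)%N -> X j.+1 = f (X j).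
  move=> j hj; rewrite /X /f.
  have h1 := hm _ hj; have h0 := hm _ (ltnW hj).
  have : P ((m j * m j - 2)%:~R - (m j.+1)%:~R).
    have -> : (m j * m j - 2)%:~R - (m j.+1)%:~R =
        (e j.+1 - (m j.+1)%:~R) - (e j - (m j)%:~R) * (e j + (m j)%:~R) :> algC.
      by rewrite e_rec rmorphB rmorphM /=; ring.
    apply: (P_sub hP) => //; apply: (P_mulr hP) => //.
    by apply: (ints_add hK); [exact: e_ints | exact: ints_int].
  by move/(P_intE hK pp hP) => <-; rewrite rmorphB rmorphM /= expr2.
have XJ : X p = 0.
  have := hm _ (leqnn p); rewrite e_p sub0r => /(P_opp hP); rewrite opprK.
  by move/(P_int hK pp hP); rewrite -(Fp_int_eq0 _ pp) => /eqP.
have Xit : forall i t, (i + t <= p)%N -> X (i + t)%N = iter t f (X i).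
  move=> i; elim=> [|t IH] hit; first by rewrite addn0.
  by rewrite addnS /= XR ?IH //; lia.
have inj : injective (fun i : 'I_p.+1 => X i).
  move=> i k; wlog ik : i k / (i <= k)%N.
    by move=> W ee; case/orP: (leq_total i k) => h; [apply: W | apply/esym/W].
  move=> ee; apply/val_inj/eqP; rewrite eqn_leq ik /= leqNgt; apply/negP => ik'.
  have hk : (k <= p)%N by rewrite -ltnS.
  have h1 : X (i + (p - k))%N = 0.
    by rewrite Xit; [rewrite ee -Xit ?subnKC // | lia].
  have : X p = iter (k - i) f (X (i + (p - k))%N).
    by rewrite -Xit; [congr X; lia | lia].
  rewrite h1 XJ; have -> : (k - i = (k - i).-1.+1)%N by lia.
  by move/esym/eqP; rewrite (negbTE (iter_f0_neq0 _)).
have := leq_card _ inj; rewrite card_ord card_Fp //; lia.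
Qed.

Lemma exists_nonres : exists gam (N : int),
  [/\ ints K gam, P (gam ^+ 2 - N%:~R) & forall y : 'F_p, y ^+ 2 != N%:~R].
Proof.
have [j0 [hj0 ng]] : exists j0, (j0 <= p)%N /\ ~ Good j0.
  apply: NNPP => hn; apply: not_all_good => j hj; apply: NNPP => hg.
  by apply: hn; exists j.
have [j [hj nj gj]] := nat_switch hj0 ng good_p.
case: gj => m hm.
exists (e j), (m + 2); split; first exact: e_ints.
  have -> : e j ^+ 2 - (m + 2)%:~R = e j.+1 - m%:~R by rewrite e_rec rmorphD /=; ring.
  exact: hm.
move=> y; apply/negP => /eqP hy; apply: nj.
have hPy : P (e j ^+ 2 - (y%:R) ^+ 2).
  have -> : e j ^+ 2 - (y%:R) ^+ 2 = (e j.+1 - m%:~R) + (((m + 2)%:~R) - ((nat_of_ord y * nat_of_ord y)%N%:Z)%:~R) :> algC.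
    by rewrite e_rec rmorphD /= -!pmulrn natrM; ring.
  apply: (P_add hP) => //; apply/(P_intE hK pp hP).
  by rewrite -hy -pmulrn natrM Fp_natr expr2.
have : P ((e j - y%:R) * (e j + y%:R)) by rewrite -subr_sqr.
case/(P_prime hP).
- by apply: (ints_sub hK); [exact: e_ints | exact: (ints_int hK y)].
- by apply: (ints_add hK); [exact: e_ints | exact: (ints_int hK y)].
- by move=> h; exists y; rewrite -pmulrn.
- by move=> h; exists (- (y%:Z)); rewrite mulrNz opprK -pmulrn.
Qed.

Lemma exists_beta (a : int) : ~~ (p %| `|a|)%N ->
  exists beta, ints K beta /\ P (beta ^+ 2 - a%:~R).
Proof.
move=> na.
have [[y hy]|nsq] := classic (exists y : 'F_p, y ^+ 2 = a%:~R).
  exists (nat_of_ord y)%:R; split; first exact: (ints_int hK y).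
  have -> : (nat_of_ord y)%:R ^+ 2 = (((nat_of_ord y) * (nat_of_ord y))%N%:Z)%:~R :> algC.
    by rewrite -pmulrn natrM expr2.
  apply/(P_intE hK pp hP).
  by rewrite -hy -pmulrn natrM Fp_natr expr2.
have [gam [N [hg hgN hN]]] := exists_nonres.
have ha : forall y : 'F_p, y ^+ 2 != a%:~R by move=> y; apply/eqP => h; apply: nsq; exists y.
have [c hc] := qr_lemma (F := 'F_p) (ltac:(by rewrite card_Fp)) (Fp_two hK pp op hP) hN ha.
exists ((nat_of_ord c)%:R * gam); split.
  by apply: (ints_mul hK) => //; exact: (ints_int hK c).
have -> : ((nat_of_ord c)%:R * gam) ^+ 2 - a%:~R =
   (nat_of_ord c)%:R ^+ 2 * (gam ^+ 2 - N%:~R) +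
   ((N * ((nat_of_ord c * nat_of_ord c)%N)%:Z)%:~R - a%:~R) :> algC.
  by rewrite rmorphM /= -pmulrn natrM; ring.
apply: (P_add hP); first by apply: (P_mul hP) => //; apply: (ints_exp hK); exact: (ints_int hK c).
apply/(P_intE hK pp hP).
by rewrite hc rmorphM /= -pmulrn natrM Fp_natr expr2.
Qed.
End Descent.

Section Quad.
Variable K : cset.
Hypothesis hKf : fieldQ K.
Let hK : subringQ K := hKf.1.
Variable al : algC.
Variable a : int.
Hypothesis hal : al ^+ 2 = a%:~R.
Hypothesis nK : ~ K al.

Let L := quad K al.

Lemma al_Qbase : Qbase (al ^+ 2).
Proof. by exists a%:~R; rewrite rmorph_int. Qed.

Lemma L_ring : subringQ L.
Proof. exact: quad_ring hK al_Qbase. Qed.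

Lemma KL x : K x -> L x.
Proof. exact: quad_sub. Qed.

Lemma Ka : K a%:~R. Proof. exact: sr_int. Qed.

Lemma uniq_rep u v u' v' : K u -> K v -> K u' -> K v' ->
  u + v * al = u' + v' * al -> u = u' /\ v = v'.
Proof.
move=> hu hv hu' hv' e.
have [ev|nv] := eqVneq v v'.
  by subst v'; split=> //; move/addIr: e.
exfalso; apply: nK.
have -> : al = (u' - u) / (v - v').
  have nv' : v - v' != 0 by rewrite subr_eq0.
  apply: (mulIf nv'); rewrite mulfVK //.
  transitivity ((u + v * al) - (u' + v' * al) + (u' - u)); first ring.
  by rewrite e subrr add0r.
apply: (sr_mul hK); first exact: (sr_sub hK).
by apply: hKf.2; [exact: (sr_sub hK) | rewrite subr_eq0].
Qed.

Lemma hor_conj u v c : K u -> K v -> allR K c ->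
  exists A B, [/\ K A, K B, hor (u + v * al) c = A + B * al & hor (u - v * al) c = A - B * al].
Proof.
move=> hu hv; elim: c => [|x c IH] /=.
  by move=> _; exists 0, 0; split; rewrite ?mul0r ?addr0 ?subr0 //; exact: (sr0 hK).
case=> hx /IH [A [B [hA hB e1 e2]]]; rewrite e1 e2.
exists (x + u * A + v * B * a%:~R), (u * B + v * A); split.
- by apply: (sr_add hK); [apply: (sr_add hK) => //; exact: (sr_mul hK) | apply: (sr_mul hK); [exact: (sr_mul hK) | exact: Ka]].
- by apply: (sr_add hK); exact: (sr_mul hK).
- by rewrite -hal; ring.
- by rewrite -hal; ring.
Qed.

Lemma horner_hor (q : {poly algC}) x : q.[x] = hor x q.
Proof. by rewrite horner_coef hor_sum. Qed.

Lemma conj_Aint u v : K u -> K v -> u + v * al \in Aint -> u - v * al \in Aint.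
Proof.
move=> hu hv hx.
have hq : minCpoly (u + v * al) \is a polyOver Num.int by exact: hx.
have hc : allR K (minCpoly (u + v * al)).
  apply/allR_nth => i _; move/polyOverP: hq => /(_ i) /intrP [m ->]; exact: (sr_int hK).
have [A [B [hA hB e1 e2]]] := hor_conj hu hv hc.
have r1 := root_minCpoly (u + v * al); move: r1; rewrite /root horner_hor e1 => /eqP e0.
have [A0 B0] : A = 0 /\ B = 0.
  by apply: uniq_rep => //; [exact: (sr0 hK) | exact: (sr0 hK) | rewrite e0 mul0r addr0].
apply: (root_monic_Aint (p := minCpoly (u + v * al))) => //; last exact: minCpoly_monic.
by rewrite /root horner_hor e2 A0 B0 mul0r subr0.
Qed.

Lemma al_Aint : al \in Aint.
Proof.
apply: (root_monic_Aint (p := 'X^2 - (a%:~R)%:P)).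
- by rewrite /root !hornerE hal subrr.
- exact: monicXnsubC.
- by rewrite polyOverXnsubC intr_int.
Qed.

Definition D : algC := 2%:R * a%:~R.

Lemma KD : K D. Proof. by apply: (sr_mul hK); [exact: (sr_nat hK) | exact: Ka]. Qed.

Lemma comps x u v : ints L x -> K u -> K v -> x = u + v * al ->
  ints K (D * u) /\ ints K (D * v).
Proof.
move=> [_ hx] hu hv ex; rewrite ex in hx.
have hx' := conj_Aint hu hv hx.
split; split.
- by apply: (sr_mul hK) => //; exact: KD.
- have -> : D * u = a%:~R * ((u + v * al) + (u - v * al)) by rewrite /D; ring.
  by apply: rpredM; [exact: Aint_int | exact: rpredD].
- by apply: (sr_mul hK) => //; exact: KD.
- have -> : D * v = ((u + v * al) - (u - v * al)) * al by rewrite /D -hal; ring.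
  by apply: rpredM; [exact: rpredB | exact: al_Aint].
Qed.

Lemma intsL_add x y : ints L x -> ints L y -> ints L (x + y).
Proof. by move=> [? ?] [? ?]; split; [exact: (sr_add L_ring) | exact: rpredD]. Qed.
Lemma intsL_sub x y : ints L x -> ints L y -> ints L (x - y).
Proof. by move=> [? ?] [? ?]; split; [exact: (sr_sub L_ring) | exact: rpredB]. Qed.
Lemma intsL_mul x y : ints L x -> ints L y -> ints L (x * y).
Proof. by move=> [? ?] [? ?]; split; [exact: (sr_mul L_ring) | exact: rpredM]. Qed.
Lemma intsKL x : ints K x -> ints L x.
Proof. by move=> [? ?]; split=> //; exact: KL. Qed.
Lemma intsL_al : ints L al.
Proof. by split; [exact: (quad_al al hK) | exact: al_Aint]. Qed.

Variable p : nat.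
Hypothesis pp : prime p.
Hypothesis op : odd p.
Hypothesis na : ~~ (p %| `|a|)%N.
Variable P : cset.
Hypothesis hP : Defs.prime_above K p P.

Lemma D_notP : ~ P D.
Proof.
have -> : D = (2 * a)%:~R by rewrite /D rmorphM /=.
move/(P_int hK pp hP); rewrite abszM /= Euclid_dvdM // (negbTE na) orbF.
have h2 : (1 + 1 = 2)%N by []; rewrite h2 => h.
by have := dvdn_leq (isT : (0 < 2)%N) h; move: pp op h; case: p => [|[|[|q]]].
Qed.

Lemma D_ints : ints K D.
Proof. by rewrite /D; apply: (ints_mul hK); [exact: (ints_int hK 2) | exact: (ints_int hK)]. Qed.

Section Branch.
Variable b : algC.
Hypothesis hb : ints K b.
Hypothesis hbP : P (b ^+ 2 - a%:~R).

Definition phi u v := D * u + D * v * b.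

Definition Qb : cset := fun x => ints L x /\
  exists u v, [/\ K u, K v, x = u + v * al & P (phi u v)].

Lemma Qb_rep x u v : K u -> K v -> x = u + v * al -> ints L x -> (Qb x <-> P (phi u v)).
Proof.
move=> hu hv ex hx; split.
  move=> [_ [u' [v' [hu' hv' ex' hP']]]].
  by have [-> ->] := uniq_rep hu hv hu' hv' (etrans (esym ex) ex').
by move=> h; split=> //; exists u, v.
Qed.

Lemma phi_ints x u v : ints L x -> K u -> K v -> x = u + v * al -> ints K (phi u v).
Proof.
move=> hx hu hv ex; have [h1 h2] := comps hx hu hv ex.
by apply: (ints_add hK) => //; apply: (ints_mul hK).
Qed.

Lemma Lrep x : L x -> exists u v, [/\ K u, K v & x = u + v * al].
Proof. by []. Qed.

Lemma phi_mul u v u' v' :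
  D * phi (u * u' + a%:~R * v * v') (u * v' + v * u') =
  phi u v * phi u' v' + (D * v) * (D * v') * (a%:~R - b ^+ 2).
Proof. by rewrite /phi; ring. Qed.

Lemma P_amb : P (a%:~R - b ^+ 2).
Proof. by rewrite -opprB; apply: (P_opp hP). Qed.

Lemma Qb_mul_key x y : ints L x -> ints L y ->
  forall u v u' v', K u -> K v -> K u' -> K v' -> x = u + v * al -> y = u' + v' * al ->
  K (u * u' + a%:~R * v * v') /\ K (u * v' + v * u') /\
  x * y = (u * u' + a%:~R * v * v') + (u * v' + v * u') * al /\
  (P (phi (u * u' + a%:~R * v * v') (u * v' + v * u')) <-> P (phi u v * phi u' v')) /\
  ints K (phi u v) /\ ints K (phi u' v').
Proof.
move=> hx hy u v u' v' hu hv hu' hv' ex ey.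
have hU : K (u * u' + a%:~R * v * v').
  by apply: (sr_add hK); apply: (sr_mul hK) => //; apply: (sr_mul hK) => //; exact: Ka.
have hV : K (u * v' + v * u') by apply: (sr_add hK); apply: (sr_mul hK).
have exy : x * y = (u * u' + a%:~R * v * v') + (u * v' + v * u') * al.
  by rewrite ex ey -hal; ring.
have hxy : ints L (x * y) by exact: intsL_mul.
have i1 := phi_ints hx hu hv ex; have i2 := phi_ints hy hu' hv' ey.
have i3 := phi_ints hxy hU hV exy.
have [_ hDv] := comps hx hu hv ex; have [_ hDv'] := comps hy hu' hv' ey.
have hE : P ((D * v) * (D * v') * (a%:~R - b ^+ 2)).
  by apply: (P_mul hP) => //; [apply: (ints_mul hK) | exact: P_amb].
do 4 (split=> //); split.
- move=> h; have : P (D * phi (u * u' + a%:~R * v * v') (u * v' + v * u')) by apply: (P_mul hP) => //; exact: D_ints.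
  rewrite phi_mul => h2; have -> : phi u v * phi u' v' =
     (phi u v * phi u' v' + D * v * (D * v') * (a%:~R - b ^+ 2)) - D * v * (D * v') * (a%:~R - b ^+ 2) by ring.
  exact: (P_sub hP).
- move=> h; have : P (D * phi (u * u' + a%:~R * v * v') (u * v' + v * u')).
    by rewrite phi_mul; apply: (P_add hP).
  by case/(P_prime hP); [exact: D_ints | by [] | move/D_notP | by []].
Qed.

Lemma phi_sub u v u' v' : phi (u - u') (v - v') = phi u v - phi u' v'.
Proof. by rewrite /phi; ring. Qed.

Lemma Qb_prime : Defs.prime_above L p Qb.
Proof.
have K0 := sr0 hK.
split.
- by move=> x [].
- split; first by split; [exact: (sr0 L_ring) | exact: Aint0].
  exists 0, 0; split=> //; first by rewrite mul0r addr0.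
  by rewrite /phi !mulr0 mul0r addr0; exact: (P0 hP).
- move=> x y [hx [u [v [hu hv ex hp]]]] [hy [u' [v' [hu' hv' ey hp']]]].
  split; first exact: intsL_sub.
  exists (u - u'), (v - v'); split; [exact: (sr_sub hK) | exact: (sr_sub hK) | |].
    by rewrite ex ey; ring.
  by rewrite phi_sub; exact: (P_sub hP).
- move=> c x hc [hx [u [v [hu hv ex hp]]]].
  have [u' [v' [hu' hv' ec]]] := Lrep hc.1.
  have [hU [hV [exy [hiff _]]]] := Qb_mul_key hc hx hu' hv' hu hv ec ex.
  split; first exact: intsL_mul.
  exists (u' * u + a%:~R * v' * v), (u' * v + v' * u); split=> //.
  apply/hiff; apply: (P_mul hP) => //; exact: phi_ints hc hu' hv' ec.
- split.
  + move=> [_ [u [v [hu hv e1 hp]]]].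
    have e2 : 1 + 0 * al = u + v * al by rewrite mul0r addr0.
    have [eu ev] := uniq_rep (sr1 hK) K0 hu hv e2.
    subst u v; by move: hp; rewrite /phi !mulr1 mulr0 mul0r addr0 => /D_notP.
  + move=> x y hx hy [hxy [u [v [hU hV exy hp]]]].
    have [u1 [v1 [hu1 hv1 ex]]] := Lrep hx.1.
    have [u2 [v2 [hu2 hv2 ey]]] := Lrep hy.1.
    have [hU' [hV' [exy' [hiff [i1 i2]]]]] := Qb_mul_key hx hy hu1 hv1 hu2 hv2 ex ey.
    have [eu ev] := uniq_rep hU hV hU' hV' (etrans (esym exy) exy').
    subst u v; move/hiff: hp => /(P_prime hP) [] // h; [left|right].
      by split=> //; exists u1, v1.
    by split=> //; exists u2, v2.
  + split; first exact/intsKL/(ints_int hK p).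
    exists p%:R, 0; split; [exact: (sr_nat hK) | exact: K0 | by rewrite mul0r addr0 |].
    rewrite /phi !mulr0 mul0r addr0; apply: (P_mul hP); [exact: D_ints | exact: (P_p hP)].
Qed.

Lemma Qb_over : lies_over K Qb P.
Proof.
move=> x hx.
have hrep : x = x + 0 * al by rewrite mul0r addr0.
split.
- move=> [hxL [u [v [hu hv ex hp]]]].
  have [eu ev] := uniq_rep hx (sr0 hK) hu hv (etrans (esym hrep) ex).
  subst u v; move: hp; rewrite /phi !mulr0 mul0r addr0.
  by case/(P_prime hP); [exact: D_ints | by split=> //; case: hxL | move/D_notP | by []].
- move=> hp; have hxi := P_ints hP hp; split; first exact: intsKL.
  exists x, 0; split=> //; first exact: (sr0 hK).
  by rewrite /phi !mulr0 mul0r addr0; apply: (P_mul hP) => //; exact: D_ints.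
Qed.

End Branch.

Lemma Qb_distinct b : ints K b -> P (b ^+ 2 - a%:~R) ->
  ~ (Qb b (al - b) <-> Qb (- b) (al - b)).
Proof.
move=> hb hbP [h _].
have hx : ints L (al - b) by apply: intsL_sub; [exact: intsL_al | exact: intsKL].
have hrep : al - b = - b + 1 * al by rewrite mul1r addrC.
have hu : K (- b) by apply: (sr_opp hK); case: hb.
have : Qb b (al - b).
  apply/(Qb_rep b hu (sr1 hK) hrep hx); rewrite /phi.
  by rewrite mulr1 mulrN addNr; exact: (P0 hP).
move/h/(Qb_rep (- b) hu (sr1 hK) hrep hx); rewrite /phi.
have -> : D * - b + D * 1 * - b = - (2%:R * D * b) by ring.
move/(P_opp hP); rewrite opprK.
case/(P_prime hP); [exact: (ints_mul hK (ints_int hK 2) D_ints) | exact: hb | |].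
  case/(P_prime hP); [exact: (ints_int hK 2) | exact: D_ints | |exact: D_notP].
  move=> h2; apply: (two_notP hK pp op hP); exact: h2.
move=> hbp; apply: (@P_not1 _ _ _ hP).
have hpa : P (a%:~R).
  have -> : a%:~R = b * b - (b ^+ 2 - a%:~R) :> algC by ring.
  by apply: (P_sub hP) => //; apply: (P_mul hP).
by move/(P_int hK pp hP): hpa; rewrite (negbTE na).
Qed.

Lemma Qb_exh_branch Q c : Defs.prime_above L p Q -> lies_over K Q P ->
  ints K c -> P (c ^+ 2 - a%:~R) -> Q (al - c) -> forall x, Q x <-> Qb c x.
Proof.
move=> hQ hov hc hcP hQc x.
have hLr := L_ring.
have DL : ints L D by apply: intsKL; exact: D_ints.
split.
- move=> hx; have hxL := P_ints hQ hx.
  have [u [v [hu hv ex]]] := Lrep hxL.1.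
  apply/(Qb_rep c hu hv ex hxL).
  have [_ hDv] := comps hxL hu hv ex.
  have e : phi c u v = D * x - (D * v) * (al - c) by rewrite /phi ex; ring.
  have Kphi : K (phi c u v) by case: (phi_ints hc hxL hu hv ex).
  apply/(hov _ Kphi); rewrite e; apply: (P_sub hQ); first exact: (P_mul hQ).
  by apply: (P_mul hQ) => //; exact: intsKL.
- move=> hq; have hxL := hq.1.
  have [u [v [hu hv ex]]] := Lrep hxL.1.
  move/(Qb_rep c hu hv ex hxL): hq => hp.
  have [_ hDv] := comps hxL hu hv ex.
  have Kphi : K (phi c u v) by case: (phi_ints hc hxL hu hv ex).
  move/(hov _ Kphi): hp => hq.
  have : Q (D * x) by rewrite (_ : D * x = phi c u v + (D * v) * (al - c));
    [apply: (P_add hQ) => //; apply: (P_mul hQ) => //; exact: intsKL | rewrite /phi ex; ring].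
  case/(P_prime hQ) => // hD; exfalso; apply: D_notP.
  by apply/(hov _ KD).
Qed.

Theorem quad_step :
  (forall n (z : algC), (2 ^ n.+2)%N.-primitive_root z -> K (z + z^-1)) ->
  exists Q1 Q2 : cset,
    [/\ Defs.prime_above L p Q1 /\ lies_over K Q1 P,
        Defs.prime_above L p Q2 /\ lies_over K Q2 P,
        (exists x, ~ (Q1 x <-> Q2 x))
      & forall Q, Defs.prime_above L p Q -> lies_over K Q P ->
          (forall x, Q x <-> Q1 x) \/ (forall x, Q x <-> Q2 x)].
Proof.
move=> HQ.
have [b [hb hbP]] := exists_beta hK HQ pp op hP na.
have hb' : ints K (- b) by exact: (ints_opp hK).
have hbP' : P ((- b) ^+ 2 - a%:~R) by rewrite sqrrN.
exists (Qb b), (Qb (- b)); split.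
- by split; [exact: Qb_prime | exact: Qb_over].
- by split; [exact: Qb_prime | exact: Qb_over].
- by exists (al - b); exact: Qb_distinct.
- move=> Q hQ hov.
  have hLr := L_ring.
  have hq : Q ((al - b) * (al - - b)).
    have -> : (al - b) * (al - - b) = a%:~R - b ^+ 2 by rewrite -hal; ring.
    have hK' : K (a%:~R - b ^+ 2) by apply: (sr_sub hK); [exact: Ka | apply: (sr_exp hK); case: hb].
    by apply/(hov _ hK'); exact: P_amb.
  case/(P_prime hQ): hq.
  + by apply: intsL_sub; [exact: intsL_al | exact: intsKL].
  + by apply: intsL_sub; [exact: intsL_al | exact: intsKL].
  + by move=> h; left; apply: Qb_exh_branch.
  + by move=> h; right; apply: Qb_exh_branch.
Qed.
End Quad.

Lemma dim_le (K : cset) : fieldQ K -> forall m n (c : 'I_m -> algC) (b : 'I_n -> algC),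
  (forall i, exists2 A : 'I_m -> algC, (forall j, K (A j)) & b i = \sum_j A j * c j) ->
  (forall l : 'I_n -> algC, (forall i, K (l i)) -> \sum_i l i * b i = 0 -> forall i, l i = 0) ->
  (n <= m)%N.
Proof.
move=> hKf; have hK := hKf.1.
elim=> [|m IH] [|n] // c b hspan hind.
  have := hind (fun _ => 1) (fun _ => sr1 hK).
  have -> : \sum_(i < n.+1) 1 * b i = 0.
    by apply: big1 => i _; have [A _ ->] := hspan i; rewrite big_ord0 mulr0.
  by move=> /(_ erefl ord0) /eqP; rewrite oner_eq0.
have [A hA hbA] := fin_all_exists2 hspan.
pose c' (j : 'I_m) := c (widen_ord (leqnSn m) j).
case: (classic (exists i0, A i0 ord_max != 0)) => [[i0 hi0]|hno]; last first.
  have allz : forall i, A i ord_max = 0.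
    by move=> i; apply/eqP; apply/negP => hi; apply: hno; exists i; apply/negP.
  apply: ltnW; apply: (IH n.+1 c' b) => //.
  move=> i; exists (fun j => A i (widen_ord (leqnSn m) j)) => // ; rewrite hbA big_ord_recr /= allz mul0r addr0.
  by [].
pose r i := A i ord_max / A i0 ord_max.
have Kr : forall i, K (r i).
  by move=> i; apply: (sr_mul hK) => //; apply: hKf.2.
pose b' (k : 'I_n) := b (lift i0 k) - r (lift i0 k) * b i0.
suff : (n <= m)%N by [].
apply: (IH n c' b').
- move=> k; exists (fun j => A (lift i0 k) (widen_ord (leqnSn m) j) - r (lift i0 k) * A i0 (widen_ord (leqnSn m) j)).
    by move=> j; apply: (sr_sub hK) => //; apply: (sr_mul hK).
  rewrite /b' !hbA !big_ord_recr /=.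
  have -> : A (lift i0 k) ord_max = r (lift i0 k) * A i0 ord_max by rewrite /r mulfVK.
  rewrite mulrDr mulr_sumr [in RHS]/c' -!mulrA.
  set S1 := \sum_(i < m) _; set S2 := \sum_(i < m) _; set S3 := \sum_(i < m) _.
  have -> : S3 = S1 - S2.
    by rewrite /S1 /S2 /S3 -sumrB; apply: eq_bigr => j _; rewrite mulrBl mulrA.
  by ring.
- move=> l' hl' hsum.
  pose l i := if unlift i0 i is Some k then l' k else - \sum_k l' k * r (lift i0 k).
  have hl : forall i, K (l i).
    move=> i; rewrite /l; case: (unlift i0 i) => [k|] //.
    by apply: (sr_opp hK); apply: (sr_sum hK) => k; apply: (sr_mul hK).
  have e1 : \sum_k l' k * b' k = \sum_k l' k * b (lift i0 k) - (\sum_k l' k * r (lift i0 k)) * b i0.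
    by rewrite mulr_suml -sumrB; apply: eq_bigr => k _; rewrite /b' mulrBr mulrA.
  have hz : \sum_i l i * b i = 0.
    rewrite (bigD1_ord i0) //= /l unlift_none.
    under eq_bigr do rewrite liftK.
    move: hsum; rewrite e1 => /eqP; rewrite subr_eq0 => /eqP ->.
    by rewrite mulNr addNr.
  by move=> k; have := hind l hl hz (lift i0 k); rewrite /l liftK.
Qed.

Lemma ext_le (K L : cset) n m : fieldQ K -> ext_degree K L n -> ext_degree K L m -> (n <= m)%N.
Proof.
move=> hKf [_ [b [hbL hbi _]]] [_ [c [_ _ hcs]]].
apply: (dim_le hKf (c := c) (b := b)) => // i.
by have [A hA ->] := hcs _ (hbL i); exists A.
Qed.

Lemma ext_unique (K L : cset) n m : fieldQ K -> ext_degree K L n -> ext_degree K L m -> n = m.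
Proof. by move=> hKf h1 h2; apply/eqP; rewrite eqn_leq (ext_le hKf h1 h2) (ext_le hKf h2 h1). Qed.

Lemma ext_refl (K : cset) : fieldQ K -> ext_degree K K 1.
Proof.
move=> [hK _]; split=> //; exists (fun _ => 1); split.
- by move=> _; exact: (sr1 hK).
- move=> l _; rewrite big_ord1 mulr1 => h i; by rewrite (ord1 i).
- by move=> x hx; exists (fun _ => x) => //; rewrite big_ord1 mulr1.
Qed.

Lemma sum2 (F : 'I_2 -> algC) : \sum_i F i = F ord0 + F ord_max.
Proof. by rewrite big_ord_recr big_ord1; congr (F _ + _); apply: val_inj. Qed.

Lemma ext_quad (K : cset) al : fieldQ K -> Qbase (al ^+ 2) -> ~ K al ->
  ext_degree K (quad K al) 2.
Proof.
move=> hKf hal nK; have hK := hKf.1.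
split; first by move=> x; apply: quad_sub.
exists (fun i : 'I_2 => if i == ord0 then 1 else al); split.
- move=> i; case: ifP => _; [exact/quad_sub/(sr1 hK) | exact: quad_al].
- move=> l hl; rewrite sum2 /= mulr1 => h0.
  have h0' : l ord0 + l ord_max * al = 0 + 0 * al by rewrite h0 mul0r addr0.
  have [e0 e1] := uniq_rep hKf nK (hl ord0) (hl ord_max) (sr0 hK) (sr0 hK) h0'.
  move=> i; have : i = ord0 \/ i = ord_max.
    by case: i => [[|[|k]] hi]; [left|right|by []]; apply: val_inj.
  by case=> ->.
- move=> _ [u [v [hu hv ->]]]; exists (fun i : 'I_2 => if i == ord0 then u else v).
    by move=> i; case: ifP.
  by rewrite sum2 /= mulr1.
Qed.

Lemma split_l m n (i : 'I_m) : split (lshift n i) = inl i.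
Proof. exact: (unsplitK (inl i)). Qed.
Lemma split_r m n (i : 'I_n) : split (rshift m i) = inr i.
Proof. exact: (unsplitK (inr i)). Qed.

Lemma ext_tower (M : cset) al m : fieldQ M -> (forall x, Qinf x -> M x) ->
  ext_degree Qinf M m -> Qbase (al ^+ 2) -> ~ M al ->
  ext_degree Qinf (quad M al) (m + m).
Proof.
move=> hMf QM [_ [e [heM hei hes]]] hal nM; have hM := hMf.1.
have hQ := (Qinf_adj_field [::]).1.
split; first by move=> x /QM; apply: quad_sub.
pose f (k : 'I_(m + m)) := match split k with inl i => e i | inr i => e i * al end.
exists f; split.
- move=> k; rewrite /f; case: (split k) => i; first exact/quad_sub/heM.
  apply: (sr_mul (quad_ring hM hal)); [exact/quad_sub/heM | exact: quad_al].
- move=> l hl; rewrite big_split_ord /=.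
  under eq_bigr do rewrite /f split_l.
  under [X in _ + X = _]eq_bigr do rewrite /f split_r mulrA.
  rewrite -mulr_suml => h0.
  have hU : M (\sum_i l (lshift m i) * e i).
    by apply: (sr_sum hM) => i; apply: (sr_mul hM); [exact: QM | exact: heM].
  have hV : M (\sum_i l (rshift m i) * e i).
    by apply: (sr_sum hM) => i; apply: (sr_mul hM); [exact: QM | exact: heM].
  have h0' : \sum_i l (lshift m i) * e i + (\sum_i l (rshift m i) * e i) * al = 0 + 0 * al.
    by rewrite h0 mul0r addr0.
  have [e0 e1] := uniq_rep hMf nM hU hV (sr0 hM) (sr0 hM) h0'.
  move=> k; rewrite -(splitK k); case: (split k) => i /=.
    by apply: (hei (fun i => l (lshift m i))) => // j.
  by apply: (hei (fun i => l (rshift m i))) => // j.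
- move=> _ [u [v [hu hv ->]]].
  have [cu hcu ->] := hes _ hu; have [cv hcv ->] := hes _ hv.
  exists (fun k => match split k with inl i => cu i | inr i => cv i end).
    by move=> k; case: (split k).
  apply/esym; rewrite big_split_ord /=.
  under eq_bigr do rewrite /f split_l.
  under [X in _ + X = _]eq_bigr do rewrite /f split_r mulrA.
  by rewrite -mulr_suml.
Qed.

Definition splits_at p (K L : cset) n (P : cset) :=
  exists Qs : 'I_n -> cset,
    [/\ (forall i, Defs.prime_above L p (Qs i) /\ lies_over K (Qs i) P),
        (forall i j, i != j -> exists x, ~ (Qs i x <-> Qs j x))
      & (forall Q, Defs.prime_above L p Q -> lies_over K Q P ->
           exists i, forall x, Q x <-> Qs i x)].

Lemma sca_of p (K L : cset) m : fieldQ K -> ext_degree K L m ->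
  (forall P, Defs.prime_above K p P -> splits_at p K L m P) -> splits_completely_above p K L.
Proof.
move=> hKf hm hs n hn P hP; have e := ext_unique hKf hn hm; subst n.
exact: hs.
Qed.

Lemma same_prime p (K : cset) Q P : Defs.prime_above K p Q -> Defs.prime_above K p P ->
  lies_over K Q P -> forall x, Q x <-> P x.
Proof.
move=> [hQ _ _ _ _] [hP _ _ _ _] hov x; split=> h.
  by have [Kx _] := hQ _ h; apply/(hov x Kx).
by have [Kx _] := hP _ h; apply/(hov x Kx).
Qed.

Lemma splits_triv p (K : cset) P : Defs.prime_above K p P -> splits_at p K K 1 P.
Proof.
move=> hP; exists (fun _ => P); split.
- by move=> _; split=> // x.
- by move=> i j; rewrite (ord1 i) (ord1 j) eqxx.
- move=> Q hQ hov; exists ord0; exact: (same_prime hQ hP hov).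
Qed.

Lemma ord2_cases (i : 'I_2) : i = ord0 \/ i = ord_max.
Proof. by case: i => [[|[|k]] hi]; [left|right|by []]; apply: val_inj. Qed.

Lemma splits_quad p (K : cset) al a P : fieldQ K ->
  (forall n (z : algC), (2 ^ n.+2)%N.-primitive_root z -> K (z + z^-1)) ->
  prime p -> odd p -> al ^+ 2 = a%:~R -> ~~ (p %| `|a|)%N -> ~ K al ->
  Defs.prime_above K p P -> splits_at p K (quad K al) 2 P.
Proof.
move=> hKf HQ pp op hal na nK hP.
have [Q1 [Q2 [h1 h2 [x hx] hex]]] := quad_step hKf hal nK pp op na hP HQ.
exists (fun i : 'I_2 => if i == ord0 then Q1 else Q2); split.
- by move=> i; case: ifP.
- by move=> i j; case: (ord2_cases i) => ->; case: (ord2_cases j) => -> //= _;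
    exists x => h; apply: hx; case: h => g1 g2; split.
- move=> Q hQ hov; case: (hex Q hQ hov) => h; [exists ord0 | exists ord_max] => //.
Qed.

Lemma restrict_prime p (M L : cset) Q : subringQ M -> (forall x, M x -> L x) ->
  Defs.prime_above L p Q -> Defs.prime_above M p (fun x => M x /\ Q x).
Proof.
move=> hM ML [hsub h0 hs hm [n1 hpr hp]]; split.
- by move=> x [hx hq]; split=> //; case: (hsub _ hq).
- by split=> //; exact: (sr0 hM).
- by move=> x y [? ?] [? ?]; split; [exact: (sr_sub hM) | exact: hs].
- move=> c x [hc hcA] [hx hq]; split; first exact: (sr_mul hM).
  by apply: hm => //; split=> //; exact: ML.
- split.
  + by move=> [_ h]; apply: n1.
  + move=> x y [hx hxA] [hy hyA] [_ hq].
    by case: (hpr x y) => // [|||h]; [split=> //; exact: ML | split=> //; exact: ML | by left | by right].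
  + by split=> //; exact: (sr_nat hM).
Qed.

Lemma split_cases m (k : 'I_(m + m)) : (exists i, k = lshift m i) \/ (exists i, k = rshift m i).
Proof. by rewrite -(splitK k); case: (split k) => i; [left|right]; exists i. Qed.

Lemma splits_tower p (M : cset) al a m : fieldQ M -> (forall x, Qinf x -> M x) ->
  prime p -> odd p -> al ^+ 2 = a%:~R -> ~~ (p %| `|a|)%N -> ~ M al ->
  (forall P, Defs.prime_above Qinf p P -> splits_at p Qinf M m P) ->
  forall P, Defs.prime_above Qinf p P -> splits_at p Qinf (quad M al) (m + m) P.
Proof.
move=> hMf QM pp op hal na nM hs P hP.
have hM := hMf.1.
have HQ : forall n (z : algC), (2 ^ n.+2)%N.-primitive_root z -> M (z + z^-1).
  by move=> n z hz; apply: QM; exact: Qinf_prim hz.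
have [Qs [hQs hdist hexh]] := hs P hP.
have : forall i : 'I_m, exists pr : cset * cset,
    [/\ Defs.prime_above (quad M al) p pr.1 /\ lies_over M pr.1 (Qs i),
        Defs.prime_above (quad M al) p pr.2 /\ lies_over M pr.2 (Qs i),
        (exists x, ~ (pr.1 x <-> pr.2 x))
      & forall Q, Defs.prime_above (quad M al) p Q -> lies_over M Q (Qs i) ->
          (forall x, Q x <-> pr.1 x) \/ (forall x, Q x <-> pr.2 x)].
  move=> i; have [Q1 [Q2 h]] := quad_step hMf hal nM pp op na (proj1 (hQs i)) HQ.
  by exists (Q1, Q2).
case/fin_all_exists=> F hF.
pose idx (k : 'I_(m + m)) := match split k with inl i => i | inr i => i end.
pose R (k : 'I_(m + m)) := match split k with inl i => (F i).1 | inr i => (F i).2 end.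
have Rover : forall k, Defs.prime_above (quad M al) p (R k) /\ lies_over M (R k) (Qs (idx k)).
  by move=> k; rewrite /R /idx; case: (split k) => i; case: (hF i) => [[? ?] [? ?] _ _].
exists R; split.
- move=> k; have [hR hov] := Rover k; split=> // x hx.
  by rewrite (hov x (QM _ hx)); apply: (proj2 (hQs (idx k))).
- move=> k k' nk.
  have [e|ne] := eqVneq (idx k) (idx k').
    move: nk e; rewrite /idx /R.
    case: (split_cases k) => [[i ->]|[i ->]]; case: (split_cases k') => [[i' ->]|[i' ->]];
      rewrite ?split_l ?split_r => nk e; subst i'.
    + by rewrite eqxx in nk.
    + by case: (hF i) => _ _ [x hx] _; exists x.
    + by case: (hF i) => _ _ [x hx] _; exists x => h; apply: hx; case: h => g1 g2; split.
    + by rewrite eqxx in nk.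
  have [x hx] := hdist _ _ ne.
  have Mx : M x.
    case: (classic (Qs (idx k) x)) => h.
      by have [_ [hsub _ _ _ _]] := (hQs (idx k), proj1 (hQs (idx k))); case: (hsub _ h).
    case: (classic (Qs (idx k') x)) => h'.
      by have [hsub _ _ _ _] := proj1 (hQs (idx k')); case: (hsub _ h').
    by exfalso; apply: hx; split.
  exists x; rewrite (proj2 (Rover k) x Mx) (proj2 (Rover k') x Mx); exact: hx.
- move=> Q hQ hov.
  have hQM := restrict_prime hM (fun x hx => quad_sub al hM hx) hQ.
  have hovM : lies_over Qinf (fun x => M x /\ Q x) P.
    move=> x hx; split; first by case=> _ /(hov x hx).
    by move=> h; split; [exact: QM | apply/(hov x hx)].
  have [i hi] := hexh _ hQM hovM.
  have hovi : lies_over M Q (Qs i).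
    by move=> x hx; split => [h|h]; [apply/hi | have := (proj2 (hi x) h); case].
  case: (hF i) => _ _ _ /(_ Q hQ hovi) [h|h].
    by exists (lshift m i) => x; rewrite /R split_l.
  by exists (rshift m i) => x; rewrite /R split_r.
Qed.

Lemma sqrt_int_sq d : sqrt_int d ^+ 2 = d%:~R.
Proof. exact: sqrtCK. Qed.

Lemma sq_Qbase (al : algC) (a : int) : al ^+ 2 = a%:~R -> Qbase (al ^+ 2).
Proof. by move=> ->; exists a%:~R; rewrite rmorph_int. Qed.

Lemma part1 p (s : seq algC) (al : algC) (a : int) : prime p -> odd p ->
  al ^+ 2 = a%:~R -> ~~ (p %| `|a|)%N ->
  splits_completely_above p (Qinf_adj s) (Qinf_adj (al :: s)).
Proof.
move=> pp op hal na.
have hKf := Qinf_adj_field s.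
have HQ : forall n (z : algC), (2 ^ n.+2)%N.-primitive_root z -> Qinf_adj s (z + z^-1).
  by move=> n z hz; apply: Qinf_sub; exact: Qinf_prim hz.
rewrite (Qinf_adj_cons s (sq_Qbase hal)).
case: (classic (Qinf_adj s al)) => hin.
  rewrite (quad_in hKf.1 hin).
  apply: (sca_of hKf (ext_refl hKf)) => P hP; exact: splits_triv.
apply: (sca_of hKf (ext_quad hKf (sq_Qbase hal) hin)) => P hP.
exact: (splits_quad hKf HQ pp op hal na hin hP).
Qed.

Lemma part2 p (s : seq algC) : prime p -> odd p ->
  (forall al, al \in s -> exists a : int, al ^+ 2 = a%:~R /\ ~~ (p %| `|a|)%N) ->
  splits_completely_above p Qinf (Qinf_adj s).
Proof.
move=> pp op.
have hQf : fieldQ Qinf := Qinf_adj_field [::].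
suff : (forall al, al \in s -> exists a : int, al ^+ 2 = a%:~R /\ ~~ (p %| `|a|)%N) ->
  exists m, ext_degree Qinf (Qinf_adj s) m /\
    forall P, Defs.prime_above Qinf p P -> splits_at p Qinf (Qinf_adj s) m P.
  by move=> h hs; have [m [hm hsp]] := h hs; exact: (sca_of hQf hm).
elim: s => [|al s IH] hs.
  by exists 1%N; split; [exact: ext_refl | move=> P hP; exact: splits_triv].
have [a [hal na]] := hs al (mem_head _ _).
have [m [hm hsp]] : exists m, ext_degree Qinf (Qinf_adj s) m /\
    forall P, Defs.prime_above Qinf p P -> splits_at p Qinf (Qinf_adj s) m P.
  by apply: IH => b hb; apply: hs; rewrite in_cons hb orbT.
have hMf := Qinf_adj_field s.
rewrite (Qinf_adj_cons s (sq_Qbase hal)).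
case: (classic (Qinf_adj s al)) => hin.
  by rewrite (quad_in hMf.1 hin); exists m.
exists (m + m)%N; split.
  exact: (ext_tower hMf (@Qinf_sub s) hm (sq_Qbase hal) hin).
exact: (splits_tower hMf (@Qinf_sub s) pp op hal na hin hsp).
Qed.

Theorem corollary2p9 (p : nat) (r : nat) (d : nat -> int) :
  prime p -> odd p -> (1 <= r)%N ->
  (forall i, (1 <= i <= r)%N -> squarefree_int (d i)) ->
  (~~ (p %| `|d 1%N|)%N ->
     splits_completely_above p
       (Qinf_adj [seq sqrt_int (d i) | i <- iota 2 r.-1])
       (Qinf_adj [seq sqrt_int (d i) | i <- iota 1 r]))
  /\
  (~~ (p %| `|(\prod_(1 <= i < r) d i)%R|)%N ->
     splits_completely_above p Qinf
       (Qinf_adj [seq sqrt_int (d i) | i <- iota 1 r.-1])).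
Proof.
move=> pp op hr _; split.
- move=> nd; case: r hr => [|r] // _ /=.
  exact: (part1 pp op (sqrt_int_sq (d 1%N)) nd).
- move=> nd; apply: (part2 pp op) => al /mapP [i hi ->].
  exists (d i); split; first exact: sqrt_int_sq.
  apply: contra nd => hdi.
  have hi' : i \in index_iota 1 r by rewrite /index_iota subn1.
  rewrite (big_rem i hi') /= abszM.
  exact: dvdn_mulr.
Qed.
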